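(* For the root system of type $C_3$ (Bourbaki numbering, $\alpha_3$ long) one has $\partial_3(x_3)=\partial_2\partial_3\partial_2(x_2^3)=\partial_1\partial_2\partial_3\partial_2\partial_1(x_1^5)=1$, and consequently $\partial_1\partial_2\partial_3\partial_2\partial_1\partial_2\partial_3\partial_2\partial_3(x_1^5x_2^3x_3)=1$ and $ud(C_3)=9$. Likewise, for type $C_2$, $ud(C_2)=4$.
   Context: For a semisimple finite root system $\Sigma$ of rank $n$ with simple roots $\alpha_1,\dots,\alpha_n$, Cartan matrix $c_{i,j}=\alpha_j^\vee(\alpha_i)$ and fundamental weights $x_1,\dots,x_n$ with $\alpha_i=\sum_jc_{i,j}x_j$: let $S=\mathbb{Z}[x_1,\dots,x_n]$, $y_i:=x_i-\alpha_i$, $s_i$ the ring automorphism of $S$ with $s_i(x_i)=y_i$, $s_i(x_j)=x_j$ ($j\ne i$), $\partial_i(p)=(p-s_i(p))/(x_i-y_i)$, and for $w\in W$ with reduced word $s_{i_1}\cdots s_{i_l}$, $\partial_w=\partial_{i_1}\circ\cdots\circ\partial_{i_l}$. The unimodular degree $ud(\Sigma)$ is the maximum of $\deg p$ over monic monomials $p\in S$ such that $\partial_w(p)=1$ for some $w\in W$ (the Weyl group). *)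

(* Defs.v *)
From HB Require Import structures.
From mathcomp Require Import all_boot all_order all_algebra.
From mathcomp Require Import multinomials.mpoly.
From Stdlib Require Import ClassicalEpsilon.

Set Implicit Arguments.
Unset Strict Implicit.
Unset Printing Implicit Defensive.
Import GRing.Theory.
Local Open Scope ring_scope.

(* Rank n root system given by its Cartan matrix c : 'M[int]_n with
   c i j = alpha_j^vee(alpha_i); indices are 0-based ('I_n), so the
   paper's alpha_k corresponds to index k-1.  S = Z[x_1,...,x_n] is
   {mpoly int[n]}, x_i = 'X_i (fundamental weights). *)

Section DividedDifferences.
Variable n : nat.
Variable c : 'M[int]_n.

Definition alpha (i : 'I_n) : {mpoly int[n]} :=
  \sum_(j < n) (c i j)%:MP * 'X_j.

Definition srefl (i : 'I_n) (p : {mpoly int[n]}) : {mpoly int[n]} :=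
  mmap (@mpolyC n int)
    (fun j : 'I_n => if j == i then 'X_i - alpha i else 'X_j) p.

(* partial_i(p) = (p - s_i p) / (x_i - y_i), i.e. the (unique, as S is a
   domain and alpha_i <> 0) q with alpha_i * q = p - s_i p. *)
Definition ddiff (i : 'I_n) (p : {mpoly int[n]}) : {mpoly int[n]} :=
  epsilon (inhabits 0) (fun q => alpha i * q = p - srefl i p).

Definition ddiff_word (w : seq 'I_n) (p : {mpoly int[n]}) : {mpoly int[n]} :=
  foldr ddiff p w.

Definition word_act (w : seq 'I_n) (p : {mpoly int[n]}) : {mpoly int[n]} :=
  foldr srefl p w.

(* w is a reduced word: no shorter word represents the same element of W
   (elements of W being identified with their (faithful) action on S) *)
Definition reduced_word (w : seq 'I_n) : Prop :=
  forall w' : seq 'I_n, (forall p, word_act w' p = word_act w p) ->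
    (size w <= size w')%N.

(* d is the unimodular degree ud: the maximum of deg p over monic monomials
   p = 'X_[m] such that partial_w p = 1 for some w in W
   (partial_w computed along a reduced word of w). *)
Definition is_ud (d : nat) : Prop :=
  (exists (w : seq 'I_n) (m : 'X_{1..n}),
      reduced_word w /\ ddiff_word w 'X_[m] = 1 /\ mdeg m = d) /\
  (forall (w : seq 'I_n) (m : 'X_{1..n}),
      reduced_word w -> ddiff_word w 'X_[m] = 1 -> (mdeg m <= d)%N).

End DividedDifferences.

Definition mx_of_seq (n : nat) (s : seq (seq int)) : 'M[int]_n :=
  \matrix_(i < n, j < n) nth 0 (nth [::] s i) j.

(* Bourbaki numbering, alpha_n long.  c i j = alpha_j^vee(alpha_i). *)
Definition cartanC3 : 'M[int]_3 :=
  mx_of_seq 3 [:: [:: 2; -1; 0]; [:: -1; 2; -1]; [:: 0; -2; 2]].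
Definition cartanC2 : 'M[int]_2 :=
  mx_of_seq 2 [:: [:: 2; -1]; [:: -2; 2]].

Definition i1 : 'I_3 := @Ordinal 3 0 isT.
Definition i2 : 'I_3 := @Ordinal 3 1 isT.
Definition i3 : 'I_3 := @Ordinal 3 2 isT.

(* Main.v *)
Require Import Defs.
From HB Require Import structures.
From mathcomp Require Import all_boot all_order all_algebra.
From mathcomp Require Import multinomials.mpoly.
From mathcomp Require Import ring.
From Stdlib Require Import ClassicalEpsilon.
Local Open Scope ring_scope.
Import GRing.Theory.
Set Implicit Arguments.
Unset Strict Implicit.
Unset Printing Implicit Defensive.

Section Gen.
Variable n : nat.
Variable c : 'M[int]_n.
Implicit Types p q : {mpoly int[n]}.

Lemma gen_ind (P : {mpoly int[n]} -> Prop) :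
  (forall a b, P a -> P b -> P (a + b)) ->
  (forall a b, P a -> P b -> P (a * b)) ->
  (forall k, P k%:MP) -> (forall i, P 'X_i) -> forall p, P p.
Proof.
move=> HD HM HC HX; elim/mpolyind => [|k m p _ _ Hp].
  by rewrite -mpolyC0.
apply: (HD) => //; rewrite -mul_mpolyC; apply: (HM) => //.
rewrite mpolyXE_id; elim/big_rec: _ => [|i x _ Hx]; first by rewrite -mpolyC1.
apply: (HM) => //; elim: (m i) => [|k' IH]; first by rewrite expr0 -mpolyC1.
by rewrite exprS; apply: (HM).
Qed.

Definition sh (i : 'I_n) := fun j : 'I_n => if j == i then 'X_i - alpha c i else 'X_j.

Lemma sreflE i p : srefl c i p = mmap (@mpolyC n int) (sh i) p.
Proof. by []. Qed.

Lemma sreflD i : {morph srefl c i : a b / a + b}.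
Proof. by move=> a b; rewrite !sreflE rmorphD. Qed.
Lemma sreflB i : {morph srefl c i : a b / a - b}.
Proof. by move=> a b; rewrite !sreflE rmorphB. Qed.
Lemma sreflM i : {morph srefl c i : a b / a * b}.
Proof. by move=> a b; rewrite !sreflE rmorphM. Qed.
Lemma sreflC i k : srefl c i k%:MP = k%:MP.
Proof. by rewrite sreflE mmapC. Qed.
Lemma sreflX i j : srefl c i 'X_j = sh i j.
Proof. by rewrite sreflE mmapX mmap1U. Qed.

Lemma sreflXn i a k : srefl c i (a ^+ k) = (srefl c i a) ^+ k.
Proof. by rewrite !sreflE rmorphXn. Qed.
Lemma srefl_nat i k : srefl c i k%:R = k%:R.
Proof. by rewrite sreflE rmorph_nat. Qed.
Lemma srefl1 i : srefl c i 1 = 1.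
Proof. by rewrite sreflE rmorph1. Qed.
Lemma sreflN i : {morph srefl c i : a / - a}.
Proof. by move=> a; rewrite !sreflE rmorphN. Qed.

Lemma word_act_cons i w p : word_act c (i :: w) p = srefl c i (word_act c w p).
Proof. by []. Qed.

Lemma word_actD w : {morph word_act c w : a b / a + b}.
Proof. by elim: w => // i w IH a b; rewrite !word_act_cons IH sreflD. Qed.
Lemma word_actM w : {morph word_act c w : a b / a * b}.
Proof. by elim: w => // i w IH a b; rewrite !word_act_cons IH sreflM. Qed.
Lemma word_actC w k : word_act c w k%:MP = k%:MP.
Proof. by elim: w => // i w IH; rewrite word_act_cons IH sreflC. Qed.

Lemma word_act_ext w w' : (forall j, word_act c w 'X_j = word_act c w' 'X_j) ->
  forall p, word_act c w p = word_act c w' p.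
Proof.
move=> H; apply: gen_ind => [a b Ha Hb|a b Ha Hb|k|j] //.
- by rewrite !word_actD Ha Hb.
- by rewrite !word_actM Ha Hb.
- by rewrite !word_actC.
Qed.

Lemma ddiff_ex i p : exists q, alpha c i * q = p - srefl c i p.
Proof.
elim/gen_ind: p => [a b [qa Ha] [qb Hb]|a b [qa Ha] [qb Hb]|k|j].
- by exists (qa + qb); rewrite sreflD mulrDr Ha Hb opprD addrACA.
- exists (qa * b + srefl c i a * qb); rewrite sreflM mulrDr mulrA Ha.
  by rewrite mulrCA Hb mulrBl mulrBr addrA subrK.
- by exists 0; rewrite sreflC mulr0 subrr.
- rewrite sreflX /sh; case: eqP => [->|_]; last by exists 0; rewrite mulr0 subrr.
  by exists 1; rewrite mulr1 opprB addrC subrK.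
Qed.

Lemma ddiff_spec i p : alpha c i * ddiff c i p = p - srefl c i p.
Proof.
rewrite /ddiff; exact: (epsilon_spec (inhabits 0) (fun q => alpha c i * q = p - srefl c i p) (ddiff_ex i p)).
Qed.

Lemma ddiffE i p q : alpha c i != 0 -> alpha c i * q = p - srefl c i p -> ddiff c i p = q.
Proof.
by move=> nz H; apply: (mulfI nz); rewrite ddiff_spec H.
Qed.


Lemma X_homog j : ('X_j : {mpoly int[n]}) \is 1.-homog.
Proof. by rewrite dhomogX; apply/eqP; apply: mdeg1. Qed.

Lemma alpha_homog i : alpha c i \is 1.-homog.
Proof.
rewrite /alpha; apply: rpred_sum => j _; rewrite mul_mpolyC; apply: rpredZ.
exact: X_homog.
Qed.

Lemma sh_homog i j : sh i j \is 1.-homog.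
Proof.
rewrite /sh; case: eqP => _; last exact: X_homog.
by apply: rpredB; [exact: X_homog | exact: alpha_homog].
Qed.

Lemma srefl_homog i d p : p \is d.-homog -> srefl c i p \is d.-homog.
Proof.
move/dhomogP => H; rewrite sreflE (mpolyE p) raddf_sum big_seq /=.
apply: rpred_sum => m Hm; rewrite mmapZ mmapX mul_mpolyC; apply: rpredZ.
rewrite -(H m Hm) /= mdegE /mmap1.
elim/big_rec2: _ => [|k d' x _ Hx]; first exact: dhomog1.
have := dhomogM (dhomogMn (m k) (sh_homog i k)) Hx; by rewrite mul1n.
Qed.

Lemma ddiff_homog i d p : alpha c i != 0 -> p \is d.+1.-homog -> ddiff c i p \is d.-homog.
Proof.
move=> nz Hp; set q := ddiff c i p.
have Hr : p - srefl c i p \is d.+1.-homog by apply: rpredB => //; exact: srefl_homog.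
have E := ddiff_spec i p; rewrite -/q in E.
pose K := maxn (msize q) d.+1.
have HK : (msize q <= K)%N by rewrite leq_maxl.
have dK : (d < K)%N by rewrite leq_maxr.
have key : pihomog mdeg d.+1 (alpha c i * q) = alpha c i * pihomog mdeg d q.
  rewrite {1}(pihomog_partitionE HK) mulr_sumr raddf_sum /=.
  rewrite (bigD1 (Ordinal dK)) //= big1 ?addr0.
    by rewrite pihomog_dE //; apply: (dhomogM (alpha_homog i)); exact: pihomogP.
  move=> k nk; apply: (@pihomog_ne0 _ _ _ (1 + k)%N).
    by apply: contra nk => /eqP [] kd; apply/eqP; apply: val_inj.
  by apply: (dhomogM (alpha_homog i)); exact: pihomogP.
have : q = pihomog mdeg d q.
  apply: (mulfI nz); rewrite -key E; by rewrite pihomog_dE.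
by move=> ->; exact: pihomogP.
Qed.

Lemma ddiff_word_homog w d p : (forall i, alpha c i != 0) ->
  (size w <= d)%N -> p \is d.-homog -> ddiff_word c w p \is (d - size w)%N.-homog.
Proof.
move=> nz; elim: w d p => [|i w IH] d p /= Hs Hp; first by rewrite subn0.
have : (size w <= d)%N by apply: ltnW.
move=> /(IH d p)/(_ Hp) H.
have e : (d - size w = (d - (size w).+1).+1)%N by rewrite subnSK.
rewrite e in H; exact: ddiff_homog.
Qed.

Lemma deg_bound w m : (forall i, alpha c i != 0) ->
  ddiff_word c w 'X_[m] = 1 -> (mdeg m <= size w)%N.
Proof.
move=> nz H; case: (leqP (mdeg m) (size w)) => // lt.
have hX : ('X_[m] : {mpoly int[n]}) \is (mdeg m).-homog by rewrite dhomogX.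
have := @ddiff_word_homog w (mdeg m) 'X_[m] nz (ltnW lt) hX.
rewrite H => H1.
have := dhomog_uniq (oner_neq0 _) H1 (@dhomog1 n int mdeg).
by move=> /eqP; rewrite subn_eq0 leqNgt lt.
Qed.

End Gen.
Section States.
Variable n : nat.
Variable crow : seq (seq int).
Let c : 'M[int]_n := mx_of_seq n crow.

Lemma cE (i j : 'I_n) : c i j = nth 0 (nth [::] crow i) j.
Proof. by rewrite /c /mx_of_seq mxE. Qed.

Definition slin (i : nat) (v : seq int) : seq int :=
  mkseq (fun k => nth 0 v k - nth 0 v i * nth 0 (nth [::] crow i) k) n.
Definition lin (v : seq int) : {mpoly int[n]} := \sum_(k < n) (nth 0 v k)%:MP * 'X_k.

Lemma srefl_lin (i : 'I_n) v : srefl c i (lin v) = lin (slin i v).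
Proof.
rewrite /lin sreflE raddf_sum /=.
have E1 : forall k : 'I_n, mmap (@mpolyC n int) (sh c i) ((nth 0 v k)%:MP * 'X_k)
   = (nth 0 v k)%:MP * 'X_k - (k == i)%:R * ((nth 0 v i)%:MP * alpha c i).
  move=> k; rewrite -sreflE sreflM sreflC sreflX /sh; case: eqP => [->|_].
    by rewrite mul1r mulrBr.
  by rewrite mul0r subr0.
rewrite (eq_bigr _ (fun k _ => E1 k)) sumrB.
rewrite [X in _ - X](bigD1 i) //= eqxx mul1r [X in _ - (_ + X)]big1 ?addr0; last first.
  by move=> k /negbTE ->; rewrite mul0r.
have E2 : forall k : 'I_n, (nth 0 (slin i v) k)%:MP * 'X_k =
   (nth 0 v k)%:MP * 'X_k - (nth 0 v i)%:MP * ((c i k)%:MP * 'X_k).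
  by move=> k; rewrite nth_mkseq // cE mpolyCB mpolyCM mulrBl mulrA.
by rewrite (eq_bigr _ (fun k _ => E2 k)) sumrB -mulr_sumr.
Qed.

Lemma mcoeff_lin v (k : 'I_n) : (lin v)@_U_(k) = nth 0 v k.
Proof.
rewrite /lin raddf_sum (bigD1 k) //= big1 ?addr0.
  by rewrite mul_mpolyC mcoeffZ mcoeffXU eqxx mulr1.
by move=> j /negbTE nj; rewrite mul_mpolyC mcoeffZ mcoeffXU nj mulr0.
Qed.

Lemma alpha_lin (i : 'I_n) : alpha c i = lin (nth [::] crow i).
Proof. by apply: eq_bigr => j _; rewrite cE. Qed.

Lemma alpha_nz (i : 'I_n) : nth 0 (nth [::] crow i) i != 0 -> alpha c i != 0.
Proof.
move=> H; apply/eqP => E; have := congr1 (mcoeff U_(i)) E.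
by rewrite mcoeff0 alpha_lin mcoeff_lin => E'; rewrite E' eqxx in H.
Qed.

Definition idst : seq (seq int) :=
  mkseq (fun j => mkseq (fun k => if j == k then 1 else 0) n) n.
Definition state (w : seq 'I_n) : seq (seq int) :=
  foldr (fun i : 'I_n => map (slin (nat_of_ord i))) idst w.

Lemma size_state w : size (state w) = n.
Proof. elim: w => [|i w IH]; first by rewrite /= size_mkseq. by rewrite /= size_map. Qed.

Lemma state_ok w (j : 'I_n) : word_act c w 'X_j = lin (nth [::] (state w) j).
Proof.
elim: w => [|i w IH].
  rewrite /= /lin nth_mkseq // (bigD1 j) //= nth_mkseq // eqxx mul1r big1 ?addr0 //.
  by move=> k nk; rewrite nth_mkseq // (negbTE (contra_neq (@val_inj _ _ _ j k) _)) ?mul0r //; rewrite eq_sym.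
rewrite word_act_cons IH srefl_lin /state /= (nth_map [::]) //.
by rewrite -/(state w) size_state.
Qed.

Lemma state_rows w r : r \in state w -> size r = n.
Proof.
elim: w r => [|i w IH] r /=.
  by case/mapP => j _ ->; rewrite size_mkseq.
by case/mapP => r' _ ->; rewrite size_mkseq.
Qed.

Lemma state_eq w w' : (forall p, word_act c w p = word_act c w' p) -> state w = state w'.
Proof.
move=> H; apply: (eq_from_nth (x0 := [::])); rewrite !size_state // => j jn.
have Hj := H 'X_(Ordinal jn); rewrite !state_ok /= in Hj.
apply: (eq_from_nth (x0 := 0)).
  by rewrite (state_rows (mem_nth _ _)) ?(state_rows (mem_nth _ _)) ?size_state.
move=> k; rewrite (state_rows (mem_nth _ _)) ?size_state // => kn.
by have := congr1 (mcoeff U_(Ordinal kn)) Hj; rewrite !mcoeff_lin.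
Qed.

Lemma state_ext w w' : state w = state w' -> forall p, word_act c w p = word_act c w' p.
Proof. by move=> H; apply: word_act_ext => j; rewrite !state_ok H. Qed.

Definition entry := (seq (seq int) * seq 'I_n)%type.
Definition addE (acc : seq entry) (e : entry) :=
  if e.1 \in map fst acc then acc else rcons acc e.
Variable gens : seq 'I_n.
Definition step (B : seq entry) :=
  foldl addE B [seq (map (slin (nat_of_ord i)) b.1, i :: b.2) | b <- B, i <- gens].
Definition Bk k := iter k step [:: (idst, [::])].

Lemma addE_mem l acc e : e \in foldl addE acc l -> e \in acc \/ e \in l.
Proof.
elim: l acc => [|x l IH] acc /=; first by left.
move=> /IH [H|H]; last by right; rewrite inE H orbT.
move: H; rewrite /addE; case: ifP => _; first by left.
by rewrite mem_rcons inE => /orP [/eqP ->|H]; [right; rewrite inE eqxx | left].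
Qed.

Lemma addE_keys l acc x : x \in map fst acc ++ map fst l -> x \in map fst (foldl addE acc l).
Proof.
elim: l acc => [|y l IH] acc /=; first by rewrite cats0.
move=> Hx; apply: IH; rewrite mem_cat; rewrite mem_cat /= inE in Hx.
have Hsub : forall z, z \in map fst acc -> z \in map fst (addE acc y).
  move=> z Hz; rewrite /addE; case: ifP => _ //.
  by rewrite map_rcons mem_rcons inE Hz orbT.
case/orP: Hx => [/Hsub -> //|/orP [/eqP ->|->]]; last by rewrite orbT.
apply/orP; left; rewrite /addE; case: ifP => // _.
by rewrite map_rcons mem_rcons inE eqxx.
Qed.

Lemma Bk_inv k e : e \in Bk k -> state e.2 = e.1 /\ (size e.2 <= k)%N.
Proof.
elim: k e => [|k IH] e /=; first by rewrite inE => /eqP ->.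
rewrite -/(Bk k) => /addE_mem [/IH [-> H]|]; first by split => //; exact: leqW.
case/allpairsP => [[b i] [Hb _ ->]] /=.
by have [<- Hs] := IH _ Hb; split.
Qed.

Lemma Bk_keysS k x : x \in map fst (Bk k) -> x \in map fst (Bk k.+1).
Proof. by move=> H; rewrite /= -/(Bk k); apply: addE_keys; rewrite mem_cat H. Qed.

Hypothesis Hgens : forall i, i \in gens.

Lemma Bk_all w k : (size w <= k)%N -> state w \in map fst (Bk k).
Proof.
elim: k w => [|k IH] [|i w] //=.
- by move=> _; rewrite inE.
- by move=> _; apply: Bk_keysS; apply: (IH [::]).
move=> Hs; rewrite -/(Bk k); apply: addE_keys; rewrite mem_cat; apply/orP; right.
have /mapP [b Hb Eb] := IH w Hs.
apply/mapP; exists (map (slin i) b.1, i :: b.2) => /=; last by rewrite Eb.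
by apply/allpairsP; exists (b, i) => /=.
Qed.

Lemma upper N w : step (Bk N) = Bk N -> reduced_word c w -> (size w <= N)%N.
Proof.
move=> fix_ red.
have E : forall k, Bk (k + N) = Bk N.
  by elim => //= k IH; rewrite -/(Bk (k + N)) IH.
have := Bk_all (leq_addr N (size w)); rewrite E => /mapP [e He Ee].
have [Hs HN] := Bk_inv He.
apply: leq_trans HN; apply: red; apply: state_ext; by rewrite Hs.
Qed.

Lemma lower N w : state w \notin map fst (Bk N) -> size w = N.+1 -> reduced_word c w.
Proof.
move=> Hn Hs w' H; rewrite Hs ltnNge; apply/negP => Hw'.
by move: Hn; rewrite -(state_eq H) Bk_all.
Qed.

End States.

Definition j1 : 'I_2 := @Ordinal 2 0 isT.
Definition j2 : 'I_2 := @Ordinal 2 1 isT.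

Lemma a3_1 : alpha cartanC3 i1 = 2%:R * 'X_i1 - 'X_i2.
Proof. rewrite /alpha !big_ord_recr big_ord0 /= !mxE /=; ring. Qed.
Lemma a3_2 : alpha cartanC3 i2 = 2%:R * 'X_i2 - 'X_i1 - 'X_i3.
Proof. rewrite /alpha !big_ord_recr big_ord0 /= !mxE /=; ring. Qed.
Lemma a3_3 : alpha cartanC3 i3 = 2%:R * 'X_i3 - 2%:R * 'X_i2.
Proof. rewrite /alpha !big_ord_recr big_ord0 /= !mxE /=; ring. Qed.
Lemma a2_1 : alpha cartanC2 j1 = 2%:R * 'X_j1 - 'X_j2.
Proof. rewrite /alpha !big_ord_recr big_ord0 /= !mxE /=; ring. Qed.
Lemma a2_2 : alpha cartanC2 j2 = 2%:R * 'X_j2 - 2%:R * 'X_j1.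
Proof. rewrite /alpha !big_ord_recr big_ord0 /= !mxE /=; ring. Qed.

Ltac sx := rewrite sreflX /sh /=.
Lemma s3_11 : srefl cartanC3 i1 'X_i1 = 'X_i1 - alpha cartanC3 i1. Proof. by sx. Qed.
Lemma s3_12 : srefl cartanC3 i1 'X_i2 = 'X_i2. Proof. by sx. Qed.
Lemma s3_13 : srefl cartanC3 i1 'X_i3 = 'X_i3. Proof. by sx. Qed.
Lemma s3_21 : srefl cartanC3 i2 'X_i1 = 'X_i1. Proof. by sx. Qed.
Lemma s3_22 : srefl cartanC3 i2 'X_i2 = 'X_i2 - alpha cartanC3 i2. Proof. by sx. Qed.
Lemma s3_23 : srefl cartanC3 i2 'X_i3 = 'X_i3. Proof. by sx. Qed.
Lemma s3_31 : srefl cartanC3 i3 'X_i1 = 'X_i1. Proof. by sx. Qed.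
Lemma s3_32 : srefl cartanC3 i3 'X_i2 = 'X_i2. Proof. by sx. Qed.
Lemma s3_33 : srefl cartanC3 i3 'X_i3 = 'X_i3 - alpha cartanC3 i3. Proof. by sx. Qed.
Lemma s2_11 : srefl cartanC2 j1 'X_j1 = 'X_j1 - alpha cartanC2 j1. Proof. by sx. Qed.
Lemma s2_12 : srefl cartanC2 j1 'X_j2 = 'X_j2. Proof. by sx. Qed.
Lemma s2_21 : srefl cartanC2 j2 'X_j1 = 'X_j1. Proof. by sx. Qed.
Lemma s2_22 : srefl cartanC2 j2 'X_j2 = 'X_j2 - alpha cartanC2 j2. Proof. by sx. Qed.

Lemma nz_a i : alpha cartanC3 i != 0.
Proof. by apply: (@alpha_nz 3 [:: [:: 2; -1; 0]; [:: -1; 2; -1]; [:: 0; -2; 2]]); case: i => [[|[|[|]]]]. Qed.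
Lemma nz_e i : alpha cartanC2 i != 0.
Proof. by apply: (@alpha_nz 2 [:: [:: 2; -1]; [:: -2; 2]]); case: i => [[|[|]]]. Qed.
Definition nz_b := nz_a. Definition nz_c := nz_a. Definition nz_d := nz_a.

Ltac push3 := rewrite ?(sreflB, sreflD, sreflM, sreflXn, srefl_nat, srefl1, sreflN,
  s3_11, s3_12, s3_13, s3_21, s3_22, s3_23, s3_31, s3_32, s3_33) ?a3_1 ?a3_2 ?a3_3; ring.
Ltac push2 := rewrite ?(sreflB, sreflD, sreflM, sreflXn, srefl_nat, srefl1, sreflN,
  s2_11, s2_12, s2_21, s2_22) ?a2_1 ?a2_2; ring.
Ltac push_a := push3. Ltac push_b := push3. Ltac push_c := push3. Ltac push_d := push3.
Ltac push_e := push2.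

Lemma a_0 : ddiff cartanC3 i3 'X_i3 = (1).
Proof. by apply: ddiffE; [exact: nz_a | push_a]. Qed.

Lemma b_0 : ddiff cartanC3 i2 ('X_i2 ^+ 3) = ('X_i1 ^+ 2 - 'X_i1 * 'X_i2 + 2%:R * 'X_i1 * 'X_i3 + 'X_i2 ^+ 2 - 'X_i2 * 'X_i3 + 'X_i3 ^+ 2).
Proof. by apply: ddiffE; [exact: nz_b | push_b]. Qed.

Lemma b_1 : ddiff cartanC3 i3 ('X_i1 ^+ 2 - 'X_i1 * 'X_i2 + 2%:R * 'X_i1 * 'X_i3 + 'X_i2 ^+ 2 - 'X_i2 * 'X_i3 + 'X_i3 ^+ 2) = (2%:R * 'X_i1 + 'X_i2).
Proof. by apply: ddiffE; [exact: nz_b | push_b]. Qed.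

Lemma b_2 : ddiff cartanC3 i2 (2%:R * 'X_i1 + 'X_i2) = (1).
Proof. by apply: ddiffE; [exact: nz_b | push_b]. Qed.

Lemma c_0 : ddiff cartanC3 i1 ('X_i1 ^+ 5) = ('X_i1 ^+ 4 - 2%:R * 'X_i1 ^+ 3 * 'X_i2 + 4%:R * 'X_i1 ^+ 2 * 'X_i2 ^+ 2 - 3%:R * 'X_i1 * 'X_i2 ^+ 3 + 'X_i2 ^+ 4).
Proof. by apply: ddiffE; [exact: nz_c | push_c]. Qed.

Lemma c_1 : ddiff cartanC3 i2 ('X_i1 ^+ 4 - 2%:R * 'X_i1 ^+ 3 * 'X_i2 + 4%:R * 'X_i1 ^+ 2 * 'X_i2 ^+ 2 - 3%:R * 'X_i1 * 'X_i2 ^+ 3 + 'X_i2 ^+ 4) = ('X_i1 ^+ 2 * 'X_i2 + 'X_i1 ^+ 2 * 'X_i3 - 'X_i1 * 'X_i2 ^+ 2 - 'X_i1 * 'X_i2 * 'X_i3 + 2%:R * 'X_i2 ^+ 2 * 'X_i3 - 2%:R * 'X_i2 * 'X_i3 ^+ 2 + 'X_i3 ^+ 3).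
Proof. by apply: ddiffE; [exact: nz_c | push_c]. Qed.

Lemma c_2 : ddiff cartanC3 i3 ('X_i1 ^+ 2 * 'X_i2 + 'X_i1 ^+ 2 * 'X_i3 - 'X_i1 * 'X_i2 ^+ 2 - 'X_i1 * 'X_i2 * 'X_i3 + 2%:R * 'X_i2 ^+ 2 * 'X_i3 - 2%:R * 'X_i2 * 'X_i3 ^+ 2 + 'X_i3 ^+ 3) = ('X_i1 ^+ 2 - 'X_i1 * 'X_i2 + 2%:R * 'X_i2 ^+ 2 - 2%:R * 'X_i2 * 'X_i3 + 'X_i3 ^+ 2).
Proof. by apply: ddiffE; [exact: nz_c | push_c]. Qed.

Lemma c_3 : ddiff cartanC3 i2 ('X_i1 ^+ 2 - 'X_i1 * 'X_i2 + 2%:R * 'X_i2 ^+ 2 - 2%:R * 'X_i2 * 'X_i3 + 'X_i3 ^+ 2) = ('X_i1).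
Proof. by apply: ddiffE; [exact: nz_c | push_c]. Qed.

Lemma c_4 : ddiff cartanC3 i1 ('X_i1) = (1).
Proof. by apply: ddiffE; [exact: nz_c | push_c]. Qed.

Lemma d_0 : ddiff cartanC3 i3 ('X_i1 ^+ 5 * 'X_i2 ^+ 3 * 'X_i3) = ('X_i1 ^+ 5 * 'X_i2 ^+ 3).
Proof. by apply: ddiffE; [exact: nz_d | push_d]. Qed.

Lemma d_1 : ddiff cartanC3 i2 ('X_i1 ^+ 5 * 'X_i2 ^+ 3) = ('X_i1 ^+ 7 - 'X_i1 ^+ 6 * 'X_i2 + 2%:R * 'X_i1 ^+ 6 * 'X_i3 + 'X_i1 ^+ 5 * 'X_i2 ^+ 2 - 'X_i1 ^+ 5 * 'X_i2 * 'X_i3 + 'X_i1 ^+ 5 * 'X_i3 ^+ 2).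
Proof. by apply: ddiffE; [exact: nz_d | push_d]. Qed.

Lemma d_2 : ddiff cartanC3 i3 ('X_i1 ^+ 7 - 'X_i1 ^+ 6 * 'X_i2 + 2%:R * 'X_i1 ^+ 6 * 'X_i3 + 'X_i1 ^+ 5 * 'X_i2 ^+ 2 - 'X_i1 ^+ 5 * 'X_i2 * 'X_i3 + 'X_i1 ^+ 5 * 'X_i3 ^+ 2) = (2%:R * 'X_i1 ^+ 6 + 'X_i1 ^+ 5 * 'X_i2).
Proof. by apply: ddiffE; [exact: nz_d | push_d]. Qed.

Lemma d_3 : ddiff cartanC3 i2 (2%:R * 'X_i1 ^+ 6 + 'X_i1 ^+ 5 * 'X_i2) = ('X_i1 ^+ 5).
Proof. by apply: ddiffE; [exact: nz_d | push_d]. Qed.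

Lemma d_4 : ddiff cartanC3 i1 ('X_i1 ^+ 5) = ('X_i1 ^+ 4 - 2%:R * 'X_i1 ^+ 3 * 'X_i2 + 4%:R * 'X_i1 ^+ 2 * 'X_i2 ^+ 2 - 3%:R * 'X_i1 * 'X_i2 ^+ 3 + 'X_i2 ^+ 4).
Proof. by apply: ddiffE; [exact: nz_d | push_d]. Qed.

Lemma d_5 : ddiff cartanC3 i2 ('X_i1 ^+ 4 - 2%:R * 'X_i1 ^+ 3 * 'X_i2 + 4%:R * 'X_i1 ^+ 2 * 'X_i2 ^+ 2 - 3%:R * 'X_i1 * 'X_i2 ^+ 3 + 'X_i2 ^+ 4) = ('X_i1 ^+ 2 * 'X_i2 + 'X_i1 ^+ 2 * 'X_i3 - 'X_i1 * 'X_i2 ^+ 2 - 'X_i1 * 'X_i2 * 'X_i3 + 2%:R * 'X_i2 ^+ 2 * 'X_i3 - 2%:R * 'X_i2 * 'X_i3 ^+ 2 + 'X_i3 ^+ 3).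
Proof. by apply: ddiffE; [exact: nz_d | push_d]. Qed.

Lemma d_6 : ddiff cartanC3 i3 ('X_i1 ^+ 2 * 'X_i2 + 'X_i1 ^+ 2 * 'X_i3 - 'X_i1 * 'X_i2 ^+ 2 - 'X_i1 * 'X_i2 * 'X_i3 + 2%:R * 'X_i2 ^+ 2 * 'X_i3 - 2%:R * 'X_i2 * 'X_i3 ^+ 2 + 'X_i3 ^+ 3) = ('X_i1 ^+ 2 - 'X_i1 * 'X_i2 + 2%:R * 'X_i2 ^+ 2 - 2%:R * 'X_i2 * 'X_i3 + 'X_i3 ^+ 2).
Proof. by apply: ddiffE; [exact: nz_d | push_d]. Qed.

Lemma d_7 : ddiff cartanC3 i2 ('X_i1 ^+ 2 - 'X_i1 * 'X_i2 + 2%:R * 'X_i2 ^+ 2 - 2%:R * 'X_i2 * 'X_i3 + 'X_i3 ^+ 2) = ('X_i1).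
Proof. by apply: ddiffE; [exact: nz_d | push_d]. Qed.

Lemma d_8 : ddiff cartanC3 i1 ('X_i1) = (1).
Proof. by apply: ddiffE; [exact: nz_d | push_d]. Qed.

Lemma e_0 : ddiff cartanC2 j2 ('X_j1 ^+ 3 * 'X_j2) = ('X_j1 ^+ 3).
Proof. by apply: ddiffE; [exact: nz_e | push_e]. Qed.

Lemma e_1 : ddiff cartanC2 j1 ('X_j1 ^+ 3) = ('X_j1 ^+ 2 - 'X_j1 * 'X_j2 + 'X_j2 ^+ 2).
Proof. by apply: ddiffE; [exact: nz_e | push_e]. Qed.

Lemma e_2 : ddiff cartanC2 j2 ('X_j1 ^+ 2 - 'X_j1 * 'X_j2 + 'X_j2 ^+ 2) = ('X_j1).
Proof. by apply: ddiffE; [exact: nz_e | push_e]. Qed.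

Lemma e_3 : ddiff cartanC2 j1 ('X_j1) = (1).
Proof. by apply: ddiffE; [exact: nz_e | push_e]. Qed.

Definition crow3 : seq (seq int) := [:: [:: 2; -1; 0]; [:: -1; 2; -1]; [:: 0; -2; 2]].
Definition gens3 := [:: i1; i2; i3].
Definition crow2 : seq (seq int) := [:: [:: 2; -1]; [:: -2; 2]].
Definition gens2 := [:: j1; j2].
Lemma gens3P i : i \in gens3. Proof. by case: i => [[|[|[|k]]] Hk]. Qed.
Lemma gens2P i : i \in gens2. Proof. by case: i => [[|[|k]] Hk]. Qed.
Lemma fix3 : @step 3 crow3 gens3 (@Bk 3 crow3 gens3 9) = @Bk 3 crow3 gens3 9.
Proof. apply/eqP. vm_compute. reflexivity. Qed.
Lemma nin3 : @state 3 crow3 [:: i1; i2; i3; i2; i1; i2; i3; i2; i3] \notin map fst (@Bk 3 crow3 gens3 8).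
Proof. vm_compute. reflexivity. Qed.
Lemma fix2 : @step 2 crow2 gens2 (@Bk 2 crow2 gens2 4) = @Bk 2 crow2 gens2 4.
Proof. apply/eqP. vm_compute. reflexivity. Qed.
Lemma nin2 : @state 2 crow2 [:: j1; j2; j1; j2] \notin map fst (@Bk 2 crow2 gens2 3).
Proof. vm_compute. reflexivity. Qed.

Theorem mainTheorem6 :
  ddiff_word cartanC3 [:: i3] 'X_i3 = 1 /\
      ddiff_word cartanC3 [:: i2; i3; i2] ('X_i2 ^+ 3) = 1 /\
      ddiff_word cartanC3 [:: i1; i2; i3; i2; i1] ('X_i1 ^+ 5) = 1 /\
      ddiff_word cartanC3 [:: i1; i2; i3; i2; i1; i2; i3; i2; i3]
        ('X_i1 ^+ 5 * 'X_i2 ^+ 3 * 'X_i3) = 1 /\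
      is_ud cartanC3 9 /\
  is_ud cartanC2 4.
Proof.
have D : ddiff_word cartanC3 [:: i1; i2; i3; i2; i1; i2; i3; i2; i3]
        ('X_i1 ^+ 5 * 'X_i2 ^+ 3 * 'X_i3) = 1.
  by rewrite /ddiff_word /= d_0 d_1 d_2 d_3 d_4 d_5 d_6 d_7 d_8.
have E : ddiff_word cartanC2 [:: j1; j2; j1; j2] ('X_j1 ^+ 3 * 'X_j2) = 1.
  by rewrite /ddiff_word /= e_0 e_1 e_2 e_3.
split; first by rewrite /ddiff_word /= a_0.
split; first by rewrite /ddiff_word /= b_0 b_1 b_2.
split; first by rewrite /ddiff_word /= c_0 c_1 c_2 c_3 c_4.
split; first exact: D.
split; split.
- exists [:: i1; i2; i3; i2; i1; i2; i3; i2; i3], (U_(i1) *+ 5 + U_(i2) *+ 3 + U_(i3))%MM.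
  split; [exact: (@lower 3 crow3 gens3 gens3P 8 _ nin3) | split].
    have -> : 'X_[(U_(i1) *+ 5 + U_(i2) *+ 3 + U_(i3))%MM] = 'X_i1 ^+ 5 * 'X_i2 ^+ 3 * 'X_i3 :> {mpoly int[3]}.
      by rewrite !mpolyXn !mpolyXD.
    exact: D.
  by rewrite !mulmS !mulm0n !mdegD !mdeg1 ?mdeg0.
- move=> w m red H; apply: leq_trans (deg_bound nz_a H) _.
  exact: (@upper 3 crow3 gens3 gens3P 9 w fix3 red).
- exists [:: j1; j2; j1; j2], (U_(j1) *+ 3 + U_(j2))%MM.
  split; [exact: (@lower 2 crow2 gens2 gens2P 3 _ nin2) | split].
    have -> : 'X_[(U_(j1) *+ 3 + U_(j2))%MM] = 'X_j1 ^+ 3 * 'X_j2 :> {mpoly int[2]}.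
      by rewrite !mpolyXn !mpolyXD.
    exact: E.
  by rewrite !mulmS !mulm0n !mdegD !mdeg1 ?mdeg0.
- move=> w m red H; apply: leq_trans (deg_bound nz_e H) _.
  exact: (@upper 2 crow2 gens2 gens2P 4 w fix2 red).
Qed.
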